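(* Let $\mu$ be a monotone system over $\{0,1\}^V$ and $\theta\in(0,1)$, $T_1,T_2\ge1$. Let $(X^{(t)}_{\mu\text{-GD}})_{t\ge0}$ be the Glauber dynamics for $\mu$ started from $X^{(0)}_{\mu\text{-GD}}=\mathbf 1_V$, and let $(X^{(t)}_{\mathrm{alg}})_{t=0}^{T_1T_2}$ be the Markov chain generated by $\mathcal A_\mu(\theta,T_1,T_2)$. Then for every integer $0\le t\le T_1T_2$, \[ d_{\mathrm{TV}}(X^{(t)}_{\mu\text{-GD}},\mu)\le d_{\mathrm{TV}}(\mathsf{contr}(X^{(t)}_{\mathrm{alg}}),\mu), \] where $d_{\mathrm{TV}}$ between a random variable and a distribution means between its law and the distribution.
   Context: Partial order on $\{0,1\}^S$: coordinatewise. Monotone system: for every $v\in V$ and all feasible (positive-probability) $\sigma\preceq\tau$ in $\{0,1\}^{V\setminus\{v\}}$, $\mu^\sigma_v(1)\le\mu^\tau_v(1)$, where $\mu^\sigma_v$ is the conditional marginal at $v$. Glauber dynamics for $\mu$: pick $v$ uniformly, resample $X_v\sim\mu_v^{X_{V\setminus\{v\}}}$. Tilted distribution $(\theta*\mu)(\sigma)\propto\mu(\sigma)\theta^{\|\sigma\|_1}$. $\mathsf{lift}:\{0,1\}^V\to\{0,1,\star\}^V$ is random: independently per coordinate, $0\mapsto0$, $1\mapsto\star$ w.p. $1-\theta$ and $1\mapsto1$ w.p. $\theta$. $\mathsf{contr}$ maps $0\mapsto0$ and $1,\star\mapsto1$ coordinatewise. Algorithm $\mathcal A_\mu(\theta,T_1,T_2)$: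 set $X=\mathsf{lift}(\mathbf 1_V)$; repeat $T_1$ times: (a) $X\gets\mathsf{contr}(X)$; (b) $X\gets\mathsf{lift}(X)$, $S=\{v:X_v\ne\star\}$; (c) repeat $T_2$ times: pick $v\in V$ uniformly; if $v\in S$ resample $X_v\sim(\theta*\mu)_v^{\sigma_{V\setminus\{v\}}}$ with $\sigma=\mathsf{contr}(X)$, otherwise keep $X_v=\star$. $X^{(0)}_{\mathrm{alg}}=\mathsf{lift}(\mathbf 1_V)$ and $X^{(t)}_{\mathrm{alg}}$ is the state after the $t$-th single-site step in (c). *)

(* Defs.v *)
From HB Require Import structures.
From mathcomp Require Import all_boot all_order all_algebra.
Set Implicit Arguments. Unset Strict Implicit. Unset Printing Implicit Defensive.
Import Order.TTheory GRing.Theory Num.Theory.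
Local Open Scope ring_scope.

Section Defs.
Variable R : realFieldType.
Variable V : finType.

Definition config := {ffun V -> bool}.
(* lifted configurations in {0,1,star}^V: Some false = 0, Some true = 1, None = star *)
Definition lconfig := {ffun V -> option bool}.

Definition upd (T : Type) (x : {ffun V -> T}) (v : V) (b : T) : {ffun V -> T} :=
  [ffun u => if u == v then b else x u].

Definition is_distr (mu : config -> R) : Prop :=
  (forall x, 0 <= mu x) /\ \sum_(x : config) mu x = 1.

Definition feasible (mu : config -> R) (x : config) (v : V) : Prop :=
  0 < mu (upd x v true) + mu (upd x v false).

(* conditional marginal mu^{x_{V\{v}}}_v(1); convention: 1 if infeasible *)
Definition cond_marg (mu : config -> R) (x : config) (v : V) : R :=
  let a := mu (upd x v true) in let b := mu (upd x v false) in
  if a + b == 0 then 1 else a / (a + b).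

Definition monotone_system (mu : config -> R) : Prop :=
  forall (v : V) (s t : config),
    (forall u, u != v -> (s u <= t u)%N) ->
    feasible mu s v -> feasible mu t v ->
    cond_marg mu s v <= cond_marg mu t v.

Definition norm1 (x : config) : nat := \sum_(v : V) (x v : nat).

Definition tilt (theta : R) (mu : config -> R) (x : config) : R :=
  mu x * theta ^+ norm1 x / \sum_(y : config) mu y * theta ^+ norm1 y.

Definition ones : config := [ffun => true].

Definition dirac (T : finType) (a : T) (x : T) : R := if x == a then 1 else 0.

Definition mstep (T : finType) (K : T -> T -> R) (p : T -> R) (y : T) : R :=
  \sum_(x : T) p x * K x y.

Definition gd_kernel (mu : config -> R) (x y : config) : R :=
  #|V|%:R^-1 * \sum_(v : V)
    (if y == upd x v (y v) then
       (if y v then cond_marg mu x v else 1 - cond_marg mu x v)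
     else 0).

Definition law_gd (mu : config -> R) (t : nat) : config -> R :=
  iter t (mstep (gd_kernel mu)) (dirac ones).

Definition contr (y : lconfig) : config := [ffun v => y v != Some false].

Definition lift_kernel (theta : R) (x : config) (y : lconfig) : R :=
  \prod_(v : V)
    match x v, y v with
    | false, Some false => 1
    | false, _ => 0
    | true, Some true => theta
    | true, None => 1 - theta
    | true, Some false => 0
    end.

(* law of lift(contr(X)) when X has law p *)
Definition refresh (theta : R) (p : lconfig -> R) (y : lconfig) : R :=
  \sum_(x : lconfig) p x * lift_kernel theta (contr x) y.

Definition alg_kernel (theta : R) (mu : config -> R) (x y : lconfig) : R :=
  #|V|%:R^-1 * \sum_(v : V)
    (if x v is None then (if y == x then 1 else 0)
     else if (y == upd x v (y v)) && (y v != None) then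
       (if y v == Some true then cond_marg (tilt theta mu) (contr x) v
        else 1 - cond_marg (tilt theta mu) (contr x) v)
     else 0).

(* law of X_alg^{(t)}: X^(0) = lift(1_V); before the single-site steps
   t = i*T2 + 1 (i >= 0) the contr/lift steps (a),(b) are performed. *)
Fixpoint law_alg (theta : R) (mu : config -> R) (T2 t : nat) : lconfig -> R :=
  match t with
  | 0 => lift_kernel theta ones
  | t'.+1 =>
      let p := law_alg theta mu T2 t' in
      mstep (alg_kernel theta mu)
        (if (t' %% T2 == 0)%N then refresh theta p else p)
  end.

Definition contr_law (p : lconfig -> R) (z : config) : R :=
  \sum_(x : lconfig | contr x == z) p x.

Definition dTV (T : finType) (p q : T -> R) : R :=
  2^-1 * \sum_(x : T) `|p x - q x|.

End Defs.

(* Main.v *)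
Require Import Defs.
From HB Require Import structures.
From mathcomp Require Import all_boot all_order all_algebra.
From mathcomp Require Import ring lra.
Import Order.TTheory GRing.Theory Num.Theory.
Local Open Scope ring_scope.
Set Implicit Arguments. Unset Strict Implicit. Unset Printing Implicit Defensive.

Section Basics.
Variable R : realFieldType.
Variable V : finType.

Lemma updE (T : Type) (x : {ffun V -> T}) v b u :
  upd x v b u = if u == v then b else x u.
Proof. by rewrite /upd ffunE. Qed.

Lemma upd_same (T : Type) (x : {ffun V -> T}) v b : upd x v b v = b.
Proof. by rewrite updE eqxx. Qed.

Lemma upd_upd (T : Type) (x : {ffun V -> T}) v b c : upd (upd x v b) v c = upd x v c.
Proof. by apply/ffunP=> u; rewrite !updE; case: (u == v). Qed.

Lemma upd_id (T : Type) (x : {ffun V -> T}) v : upd x v (x v) = x.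
Proof. by apply/ffunP=> u; rewrite updE; case: eqP => // ->. Qed.

Lemma offvP (T : eqType) (x y : {ffun V -> T}) v :
  reflect (forall u, u != v -> y u = x u) (y == upd x v (y v)).
Proof.
apply: (iffP eqP) => [-> u /negbTE uv | H].
  by rewrite updE uv.
apply/ffunP=> u; rewrite updE; case: eqP => [->//|/eqP uv]; exact: H.
Qed.

Lemma offv_sym (T : eqType) (x y : {ffun V -> T}) v :
  (y == upd x v (y v)) = (x == upd y v (x v)).
Proof.
by apply/offvP/offvP => H u uv; rewrite H.
Qed.

Lemma upd_offv (T : eqType) (x y : {ffun V -> T}) v b :
  y == upd x v (y v) -> upd y v b = upd x v b.
Proof. move/offvP=> H; apply/ffunP=> u; rewrite !updE; case: eqP => // /eqP; exact: H. Qed.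

Lemma upd_offv_self (T : eqType) (x : {ffun V -> T}) v b :
  upd x v b == upd x v (upd x v b v).
Proof. by rewrite upd_same. Qed.

Lemma sum_upd (T : finType) (x : {ffun V -> T}) v (h : {ffun V -> T} -> R) :
  \sum_(y : {ffun V -> T}) (if y == upd x v (y v) then h y else 0) = \sum_(b : T) h (upd x v b).
Proof.
have -> : \sum_(b : T) h (upd x v b) = \sum_(b : T) \sum_y (if y == upd x v b then h y else 0).
  by apply: eq_bigr => b _; rewrite (bigD1 (upd x v b)) //= eqxx big1 ?addr0 // => y /negbTE ->.
rewrite exchange_big /=; apply: eq_bigr => y _.
rewrite (bigD1 (y v)) //= big1 ?addr0 // => b bn.
case: eqP => // e; move: bn; rewrite {1}e upd_same eqxx //.
Qed.

Lemma sum_fiber (T : finType) v (t0 : T) (h : {ffun V -> T} -> R) :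
  \sum_(y : {ffun V -> T}) h y = \sum_(y : {ffun V -> T} | y v == t0) \sum_(b : T) h (upd y v b).
Proof.
transitivity (\sum_(y : {ffun V -> T}) \sum_(y' : {ffun V -> T} | y' v == t0) (if y' == upd y v t0 then h y else 0)).
  apply: eq_bigr => y _; rewrite (bigD1 (upd y v t0)) /=; last by rewrite upd_same.
  by rewrite eqxx big1 ?addr0 // => y' /andP[_ /negbTE ->].
rewrite exchange_big /=; apply: eq_bigr => y' /eqP y't0.
rewrite -sum_upd; apply: eq_bigr => y _.
have -> : (y' == upd y v t0) = (y == upd y' v (y v)); last by [].
by rewrite -y't0 -offv_sym.
Qed.

Lemma sum_opt (f : option bool -> R) :
  \sum_(o : option bool) f o = f None + f (Some true) + f (Some false).
Proof.
rewrite (bigD1 None) //= (bigD1 (Some true)) //= (bigD1 (Some false)) //= big1 ?addr0 ?addrA //.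
by case=> [[]|] /=.
Qed.

Lemma sum_bool (f : bool -> R) : \sum_(b : bool) f b = f true + f false.
Proof. by rewrite big_bool. Qed.


Implicit Types (theta : R).
Definition gl (theta : R) (b : bool) (o : option bool) : R :=
  match b, o with
    | false, Some false => 1
    | false, _ => 0
    | true, Some true => theta
    | true, None => 1 - theta
    | true, Some false => 0
  end.

Lemma lkE theta (x : config V) (y : lconfig V) :
  lift_kernel theta x y = \prod_v gl theta (x v) (y v).
Proof. by []. Qed.

Definition lkv theta (x : config V) (y : lconfig V) v : R :=
  \prod_(u | u != v) gl theta (x u) (y u).

Lemma lk_upd theta (x : config V) (y : lconfig V) v b o :
  lift_kernel theta (upd x v b) (upd y v o) = gl theta b o * lkv theta x y v.
Proof.
rewrite lkE (bigD1 v) //= !upd_same; congr (_ * _).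
by apply: eq_bigr => u /negbTE uv; rewrite !updE uv.
Qed.

Lemma lkv_upd theta (x : config V) (y : lconfig V) v b o :
  lkv theta (upd x v b) (upd y v o) v = lkv theta x y v.
Proof. by apply: eq_bigr => u /negbTE uv; rewrite !updE uv. Qed.

Lemma gl_ge0 theta (b : bool) (o : option bool) : 0 <= theta <= 1 -> 0 <= gl theta b o.
Proof. by case/andP=> h0 h1; case: b; case: o => [[]|] //=; rewrite subr_ge0. Qed.

Lemma lk_ge0 theta (x : config V) (y : lconfig V) : 0 <= theta <= 1 -> 0 <= lift_kernel theta x y.
Proof. by move=> h; rewrite lkE; apply: prodr_ge0 => v _; exact: gl_ge0. Qed.

Lemma lkv_ge0 theta (x : config V) (y : lconfig V) v : 0 <= theta <= 1 -> 0 <= lkv theta x y v.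
Proof. by move=> h; apply: prodr_ge0 => u _; exact: gl_ge0. Qed.

Lemma gl_sum theta (b : bool) : \sum_o gl theta b o = 1.
Proof. rewrite sum_opt; case: b => /=; [ring | ring]. Qed.

Lemma lk_sum theta (x : config V) : \sum_y lift_kernel theta x y = 1.
Proof.
transitivity (\prod_v \sum_o gl theta (x v) o).
  by rewrite bigA_distr_bigA /=.
by rewrite big1 // => v _; rewrite gl_sum.
Qed.

Lemma gl_neq0 theta (b : bool) (o : option bool) : gl theta b o != 0 -> (o != Some false) = b.
Proof. by case: b; case: o => [[]|] //=; rewrite eqxx. Qed.

Lemma lk_neq0 theta (x : config V) (y : lconfig V) : lift_kernel theta x y != 0 -> contr y = x.
Proof.
rewrite lkE => H; apply/ffunP => v; rewrite ffunE.
apply: (@gl_neq0 theta); apply: contraNneq H => e.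
by rewrite (bigD1 v) //= e mul0r.
Qed.

Lemma lkv_neq0 theta (x : config V) (y : lconfig V) v : lkv theta x y v != 0 -> forall u, u != v -> contr y u = x u.
Proof.
move=> H u uv; rewrite ffunE.
apply: (@gl_neq0 theta); apply: contraNneq H => e.
by rewrite /lkv (bigD1 u) //= e mul0r.
Qed.

Lemma contr_upd (y : lconfig V) v o : contr (upd y v o) = upd (contr y) v (o != Some false).
Proof. apply/ffunP => u; rewrite /contr /upd !ffunE; by case: (u == v). Qed.


Lemma divr_le (x y z w : R) : 0 < y -> 0 < w -> (x / y <= z / w) = (x * w <= z * y).
Proof.
move=> y0 w0; rewrite ler_pdivlMr // mulrAC ler_pdivrMr //.
Qed.

Definition good (m : config V -> R) (x : config V) : bool := (0 < m x) || (x == ones V).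

Section CM.
Variable m : config V -> R.
Implicit Types (x y : config V) (v : V).
Hypothesis m_ge0 : forall x, 0 <= m x.

Lemma cm_upd x v b : cond_marg m (upd x v b) v = cond_marg m x v.
Proof. by rewrite /cond_marg !upd_upd. Qed.

Lemma cm_offv x y v : y == upd x v (y v) -> cond_marg m y v = cond_marg m x v.
Proof. by move=> H; rewrite /cond_marg !(upd_offv _ H). Qed.

Lemma cm_feas x v : m (upd x v true) + m (upd x v false) != 0 ->
  cond_marg m x v = m (upd x v true) / (m (upd x v true) + m (upd x v false)).
Proof. by rewrite /cond_marg => /negbTE ->. Qed.

Lemma cm_infeas x v : m (upd x v true) + m (upd x v false) = 0 -> cond_marg m x v = 1.
Proof. by rewrite /cond_marg => ->; rewrite eqxx. Qed.

Lemma cm_ge0 x v : 0 <= cond_marg m x v.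
Proof.
rewrite /cond_marg; case: eqP => // _.
by apply: divr_ge0 => //; apply: addr_ge0.
Qed.

Lemma cm_le1 x v : cond_marg m x v <= 1.
Proof.
rewrite /cond_marg; case: eqP => // /eqP H.
have hp : 0 < m (upd x v true) + m (upd x v false).
  by rewrite lt0r H addr_ge0.
by rewrite ler_pdivrMr // mul1r lerDl.
Qed.

Lemma feas0 x v : m (upd x v true) + m (upd x v false) = 0 ->
  m (upd x v true) = 0 /\ m (upd x v false) = 0.
Proof.
move=> H; have h1 := m_ge0 (upd x v true); have h2 := m_ge0 (upd x v false).
split; apply/eqP; rewrite eq_le; apply/andP; split => //; lra.
Qed.

Lemma upd_ones v : upd (ones V) v true = ones V.
Proof. by apply/ffunP=> u; rewrite updE !ffunE; case: (u == v). Qed.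

Lemma infeas_ones x v : good m x -> m (upd x v true) + m (upd x v false) = 0 -> x = ones V.
Proof.
move=> /orP[hx|/eqP//] /feas0[h1 h0].
have : m (upd x v (x v)) = 0 by case: (x v).
by rewrite upd_id => e; move: hx; rewrite e ltxx.
Qed.

Lemma G1 x v : good m x -> cond_marg m x v != 0 -> good m (upd x v true).
Proof.
move=> gx; have [/eqP H|H] := boolP (m (upd x v true) + m (upd x v false) == 0).
  by rewrite (infeas_ones gx H) upd_ones /good eqxx orbT.
rewrite cm_feas // => nz; apply/orP; left.
rewrite lt0r m_ge0 andbT; apply: contraNneq nz => ->; by rewrite mul0r.
Qed.

Lemma G2 x v : cond_marg m x v != 1 -> good m (upd x v false).
Proof.
have [/eqP H|H] := boolP (m (upd x v true) + m (upd x v false) == 0).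
  by rewrite cm_infeas // eqxx.
rewrite cm_feas // => nz; apply/orP; left.
rewrite lt0r m_ge0 andbT; apply: contraNneq nz => e.
by rewrite e addr0 divff //; move: H; rewrite e addr0.
Qed.

Lemma G3 x y v : monotone_system m -> (forall u, (x u <= y u)%N) ->
  good m x -> good m y -> cond_marg m x v <= cond_marg m y v.
Proof.
move=> ms le gx gy.
have [/eqP Hy|Hy] := boolP (m (upd y v true) + m (upd y v false) == 0).
  by rewrite (cm_infeas Hy) cm_le1.
have [/eqP Hx|Hx] := boolP (m (upd x v true) + m (upd x v false) == 0).
  have ex := infeas_ones gx Hx.
  have ey : y = ones V.
    apply/ffunP=> u; have := le u; rewrite ex !ffunE; by case: (y u).
  by rewrite ex ey.
apply: ms; first by move=> u _; exact: le.
  by rewrite /feasible lt0r Hx addr_ge0.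
by rewrite /feasible lt0r Hy addr_ge0.
Qed.

End CM.

Section Tilt.
Variable mu : config V -> R.
Variable theta : R.
Hypothesis mu_d : is_distr mu.
Hypothesis th0 : 0 < theta.
Implicit Types (x y : config V) (v : V).

Let mu_ge0 : forall x, 0 <= mu x. Proof. by case: mu_d. Qed.

Definition Zt := \sum_(y : config V) mu y * theta ^+ norm1 y.

Lemma Zt_gt0 : 0 < Zt.
Proof.
case: mu_d => h0 h1.
have [y hy] : exists y, 0 < mu y.
  apply/existsP; apply: contraT => /existsPn H.
  have : \sum_(x : config V) mu x <= 0.
    by apply: sumr_le0 => x _; move: (H x); rewrite lt0r h0 andbT negbK => /eqP ->.
  by rewrite h1 ler10.
rewrite /Zt (bigD1 y) //=; apply: ltr_wpDr.
  by apply: sumr_ge0 => z _; apply: mulr_ge0 => //; apply: exprn_ge0; exact: ltW.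
by apply: mulr_gt0 => //; exact: exprn_gt0.
Qed.

Lemma tiltE x : tilt theta mu x = mu x * (theta ^+ norm1 x / Zt).
Proof. by rewrite /tilt mulrA. Qed.

Lemma tilt_ge0 x : 0 <= tilt theta mu x.
Proof.
rewrite tiltE; apply: mulr_ge0 => //; apply: divr_ge0; last exact: ltW Zt_gt0.
by apply: exprn_ge0; exact: ltW.
Qed.

Lemma tilt_pos x : (0 < tilt theta mu x) = (0 < mu x).
Proof.
rewrite tiltE pmulr_lgt0 //; apply: divr_gt0; last exact: Zt_gt0.
exact: exprn_gt0.
Qed.

Lemma good_tilt x : good (tilt theta mu) x = good mu x.
Proof. by rewrite /good tilt_pos. Qed.

Lemma norm1_upd x v : norm1 (upd x v true) = (norm1 (upd x v false)).+1.
Proof.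
rewrite /norm1 (bigD1 v) //= [in RHS](bigD1 v) //= !upd_same add1n add0n; congr (_.+1).
by apply: eq_bigr => u /negbTE uv; rewrite !updE uv.
Qed.

Lemma tilt_upd1 x v : tilt theta mu (upd x v true) =
  theta * mu (upd x v true) * (theta ^+ norm1 (upd x v false) / Zt).
Proof. rewrite tiltE norm1_upd exprS. ring. Qed.

Lemma tilt_upd0 x v : tilt theta mu (upd x v false) =
  mu (upd x v false) * (theta ^+ norm1 (upd x v false) / Zt).
Proof. by rewrite tiltE. Qed.

Lemma cmt_infeas x v : mu (upd x v true) + mu (upd x v false) = 0 ->
  cond_marg (tilt theta mu) x v = 1.
Proof.
move=> /(feas0 mu_ge0) [h1 h0]; apply: cm_infeas.
by rewrite tilt_upd1 tilt_upd0 h1 h0 !(mulr0, mul0r) addr0.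
Qed.

Lemma cmt_feas x v : mu (upd x v true) + mu (upd x v false) != 0 ->
  cond_marg (tilt theta mu) x v =
  theta * mu (upd x v true) / (theta * mu (upd x v true) + mu (upd x v false)).
Proof.
move=> H.
set a := mu (upd x v true); set b := mu (upd x v false).
have a0 : 0 <= a by apply: mu_ge0. have b0 : 0 <= b by apply: mu_ge0.
have K0 : 0 < theta ^+ norm1 (upd x v false) / Zt.
  by apply: divr_gt0; [exact: exprn_gt0 | exact: Zt_gt0].
set K := theta ^+ _ / Zt in K0 *.
have pos : 0 < theta * a + b.
  have h : 0 < a + b by rewrite lt0r H addr_ge0.
  have [a_pos|a_le] := ltrP 0 a.
    have : 0 < theta * a by apply: mulr_gt0.
    lra.
  have -> : a = 0 by apply/eqP; rewrite eq_le a_le a0.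
  move: h; rewrite mulr0; lra.
rewrite cm_feas; last first.
  by rewrite tilt_upd1 tilt_upd0 -/a -/b -mulrDl; apply: lt0r_neq0; apply: mulr_gt0.
rewrite tilt_upd1 tilt_upd0 -/a -/b -mulrDl.
have Kn : K != 0 by apply: lt0r_neq0.
have pn : theta * a + b != 0 by apply: lt0r_neq0.
field. rewrite pn lt0r_neq0 ?Zt_gt0 //=; apply: lt0r_neq0; exact: exprn_gt0.
Qed.

Lemma tilt_mono : monotone_system mu -> monotone_system (tilt theta mu).
Proof.
move=> ms v s t le fs ft.
have feas_mu : forall x, feasible (tilt theta mu) x v ->
    mu (upd x v true) + mu (upd x v false) != 0.
  move=> x; rewrite /feasible tilt_upd1 tilt_upd0 => h.
  apply/eqP => /(feas0 mu_ge0) [h1 h0]; move: h; rewrite h1 h0 !(mulr0, mul0r) addr0 ltxx //.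
have Fs := feas_mu s fs; have Ft := feas_mu t ft.
have := ms v s t le; rewrite /feasible !lt0r Fs Ft !addr_ge0 // => /(_ isT isT).
move=> hc; rewrite !cmt_feas //; move: hc; rewrite !cm_feas //.
have ps : 0 < mu (upd s v true) + mu (upd s v false) by rewrite lt0r Fs addr_ge0.
have pt : 0 < mu (upd t v true) + mu (upd t v false) by rewrite lt0r Ft addr_ge0.
have pos : forall x, mu (upd x v true) + mu (upd x v false) != 0 ->
    0 < theta * mu (upd x v true) + mu (upd x v false).
  move=> x H; have h : 0 < mu (upd x v true) + mu (upd x v false) by rewrite lt0r H addr_ge0.
  have a0 := mu_ge0 (upd x v true); have b0 := mu_ge0 (upd x v false).
  have [a_pos|a_le] := ltrP 0 (mu (upd x v true)).
    have : 0 < theta * mu (upd x v true) by apply: mulr_gt0.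
    lra.
  have -> : mu (upd x v true) = 0 by apply/eqP; rewrite eq_le a_le a0.
  move: h; rewrite mulr0; lra.
rewrite !divr_le ?pos // => hc.
have := ler_wpM2l (ltW th0) hc.
move: (mu (upd s v true)) (mu (upd s v false)) (mu (upd t v true)) (mu (upd t v false)) => a b a' b' h.
nra.
Qed.

End Tilt.

Definition leC (x y : config V) : Prop := forall u, (x u <= y u)%N.
Definition rk (o : option bool) : nat :=
  match o with Some false => 0 | Some true => 1 | None => 2 end.
Definition leL (x y : lconfig V) : Prop := forall u, (rk (x u) <= rk (y u))%N.
Definition incr (F : lconfig V -> R) : Prop := forall x y, leL x y -> F x <= F y.

Lemma contr_mono x y : leL x y -> leC (contr x) (contr y).
Proof. by move=> H u; have := H u; rewrite !ffunE; case: (x u) => [[]|]; case: (y u) => [[]|]. Qed.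

Lemma leL_refl x : leL x x. Proof. by move=> u. Qed.

Lemma leL_upd x v o o' : (rk o <= rk o')%N -> leL (upd x v o) (upd x v o').
Proof. by move=> h u; rewrite !updE; case: (u == v). Qed.

Lemma leL_upd2 x y v o o' : leL x y -> (rk o <= rk o')%N -> leL (upd x v o) (upd y v o').
Proof. by move=> H h u; rewrite !updE; case: (u == v). Qed.

Definition kop (T : finType) (K : T -> T -> R) (F : T -> R) (x : T) : R :=
  \sum_y K x y * F y.

Lemma sum_mstep (T : finType) (K : T -> T -> R) p F :
  \sum_y mstep K p y * F y = \sum_x p x * kop K F x.
Proof.
rewrite /mstep /kop; under eq_bigr do rewrite mulr_suml.
rewrite exchange_big /=; apply: eq_bigr => x _; rewrite mulr_sumr.
by apply: eq_bigr => y _; rewrite mulrA.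
Qed.

Section Ops.
Variable mu : config V -> R.
Variable theta : R.

Definition Av (F : lconfig V -> R) (x : lconfig V) v : R :=
  if x v is None then F x else
  cond_marg (tilt theta mu) (contr x) v * F (upd x v (Some true)) +
  (1 - cond_marg (tilt theta mu) (contr x) v) * F (upd x v (Some false)).

Lemma kopA F x : kop (alg_kernel theta mu) F x = #|V|%:R^-1 * \sum_v Av F x v.
Proof.
rewrite /kop /alg_kernel.
under eq_bigr do rewrite -mulrA mulr_suml.
rewrite -mulr_sumr exchange_big /=; congr (_ * _); apply: eq_bigr => v _.
rewrite /Av; case: (x v) => [b|].
  transitivity (\sum_(y : lconfig V) (if y == upd x v (y v) then
      (if y v != None then (if y v == Some true then cond_marg (tilt theta mu) (contr x) v
        else 1 - cond_marg (tilt theta mu) (contr x) v) * F y else 0) else 0)).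
    apply: eq_bigr => y _; case: (y == _) => /=; last by rewrite mul0r.
    by case: (y v != None) => //=; rewrite mul0r.
  by rewrite sum_upd sum_opt !upd_same /= add0r.
rewrite (eq_bigr (fun i => if i == x then F i else 0)); last first.
  by move=> i _; case: eqP; rewrite ?mul1r ?mul0r.
by rewrite -big_mkcond big_pred1_eq.
Qed.

Definition GDv (G : config V -> R) (x : config V) v : R :=
  cond_marg mu x v * G (upd x v true) + (1 - cond_marg mu x v) * G (upd x v false).

Lemma kopG G x : kop (gd_kernel mu) G x = #|V|%:R^-1 * \sum_v GDv G x v.
Proof.
rewrite /kop /gd_kernel.
under eq_bigr do rewrite -mulrA mulr_suml.
rewrite -mulr_sumr exchange_big /=; congr (_ * _); apply: eq_bigr => v _.
transitivity (\sum_(y : config V) (if y == upd x v (y v) then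
      (if y v then cond_marg mu x v else 1 - cond_marg mu x v) * G y else 0)).
  by apply: eq_bigr => y _; case: (y == _) => //=; rewrite mul0r.
by rewrite sum_upd sum_bool !upd_same /GDv.
Qed.

Lemma mstepG p y : mstep (gd_kernel mu) p y = #|V|%:R^-1 * \sum_v
   (p (upd y v true) + p (upd y v false)) *
   (if y v then cond_marg mu y v else 1 - cond_marg mu y v).
Proof.
rewrite /mstep /gd_kernel.
under eq_bigr do rewrite mulrCA.
rewrite -mulr_sumr; congr (_ * _).
under eq_bigr do rewrite mulr_sumr.
rewrite exchange_big /=; apply: eq_bigr => v _.
transitivity (\sum_(x : config V) (if x == upd y v (x v) then
      p x * (if y v then cond_marg mu y v else 1 - cond_marg mu y v) else 0)).
  apply: eq_bigr => x _; rewrite offv_sym; case: eqP => [e|_]; last by rewrite mulr0.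
  by rewrite (@cm_offv mu y x v) //; apply/eqP.
by rewrite sum_upd sum_bool mulrDl.
Qed.

End Ops.

Lemma fiber_ineq (t a b al be F0 F1 Fs c ct : R) :
  0 < t -> t < 1 -> 0 <= a -> 0 <= b -> 0 <= al -> 0 <= be ->
  F0 <= F1 -> F1 <= Fs -> be * a <= al * b ->
  (a + b = 0 -> [/\ be = 0, c = 1 & ct = 1]) ->
  (a + b != 0 -> c = a / (a + b) /\ ct = t * a / (t * a + b)) ->
  (al + be) * (c * (t * F1 + (1 - t) * Fs) + (1 - c) * F0) <=
  be * (ct * F1 + (1 - ct) * F0) + al * (t * (ct * F1 + (1 - ct) * F0) + (1 - t) * Fs).
Proof.
move=> t0 t1 a0 b0 al0 be0 h01 h1s hab Hi Hf.
have [/eqP e|ne] := boolP (a + b == 0).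
  have [-> -> ->] := Hi e.
  by rewrite le_eqVlt; apply/orP; left; apply/eqP; ring.
have [-> ->] := Hf ne.
have pab : 0 < a + b by rewrite lt0r ne addr_ge0.
have ptab : 0 < t * a + b.
  have [a_pos|a_le] := ltrP 0 a.
    have : 0 < t * a by apply: mulr_gt0.
    lra.
  have -> : a = 0 by apply/eqP; rewrite eq_le a_le a0.
  move: pab; rewrite mulr0; lra.
rewrite -subr_ge0.
set D := (X in 0 <= X).
have -> : D = (1 - t) * (al * b - be * a) *
    ((Fs - F1) / (a + b) + b * (F1 - F0) / ((a + b) * (t * a + b))).
  rewrite /D; field.
  by rewrite !lt0r_neq0.
apply: mulr_ge0; first by apply: mulr_ge0; lra.
apply: addr_ge0; apply: divr_ge0; try lra.
  by apply: mulr_ge0; lra.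
by apply: mulr_ge0; lra.
Qed.

Lemma avg_mono (a b a' b' f1 f0 g1 g0 : R) :
  0 <= a -> 0 <= b -> 0 <= a' -> 0 <= b' -> 0 < a + b -> 0 < a' + b' ->
  a / (a + b) <= a' / (a' + b') ->
  (0 < a -> 0 < a' -> f1 <= g1) -> (0 < b -> 0 < b' -> f0 <= g0) ->
  (0 < b -> 0 < a' -> f0 <= g1) ->
  (f1 * a + f0 * b) / (a + b) <= (g1 * a' + g0 * b') / (a' + b').
Proof.
move=> a0 b0 a'0 b'0 p p' hc H1 H0 H01.
set c := a / (a + b) in hc *; set c' := a' / (a' + b') in hc *.
have E1 : (f1 * a + f0 * b) / (a + b) = c * f1 + (1 - c) * f0.
  rewrite /c; field; exact: lt0r_neq0.
have E2 : (g1 * a' + g0 * b') / (a' + b') = c' * g1 + (1 - c') * g0.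
  rewrite /c'; field; exact: lt0r_neq0.
rewrite E1 E2.
have c0 : 0 <= c by rewrite /c; apply: divr_ge0 => //; exact: ltW.
have c1 : c <= 1 by rewrite /c ler_pdivrMr // mul1r lerDl.
have c'1 : c' <= 1 by rewrite /c' ler_pdivrMr // mul1r lerDl.
have cpos : 0 < c -> 0 < a.
  move=> h; rewrite lt0r a0 andbT; apply: contraTneq h => e; by rewrite /c e mul0r ltxx.
have c'pos : 0 < c' -> 0 < a'.
  move=> h; rewrite lt0r a'0 andbT; apply: contraTneq h => e; by rewrite /c' e mul0r ltxx.
have c1pos : c < 1 -> 0 < b.
  move=> h; rewrite lt0r b0 andbT; apply: contraTneq h => e.
  rewrite /c e addr0 divff ?ltxx //; apply: lt0r_neq0; by move: p; rewrite e addr0.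
have c'1pos : c' < 1 -> 0 < b'.
  move=> h; rewrite lt0r b'0 andbT; apply: contraTneq h => e.
  rewrite /c' e addr0 divff ?ltxx //; apply: lt0r_neq0; by move: p'; rewrite e addr0.
clearbody c c'.
have T1 : 0 <= c * (g1 - f1).
  case: (ltrP 0 c) => [cp|h].
    apply: mulr_ge0; first lra.
    rewrite subr_ge0; apply: H1; first exact: cpos.
    apply: c'pos; lra.
  have e : c = 0 by apply/eqP; rewrite eq_le h c0.
  by rewrite e mul0r.
have T2 : 0 <= (1 - c') * (g0 - f0).
  case: (ltrP c' 1) => [cp|h].
    apply: mulr_ge0; first lra.
    rewrite subr_ge0; apply: H0; last exact: c'1pos.
    apply: c1pos; lra.
  have e : c' = 1 by apply/eqP; rewrite eq_le h c'1.
  by rewrite e subrr mul0r.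
have T3 : 0 <= (c' - c) * (g1 - f0).
  case: (ltrP c c') => [cp|h].
    apply: mulr_ge0; first lra.
    rewrite subr_ge0; apply: H01; first (apply: c1pos; lra).
    apply: c'pos; lra.
  have e : c' = c by apply/eqP; rewrite eq_le h hc.
  by rewrite e subrr mul0r.
have -> : c' * g1 + (1 - c') * g0 = c * f1 + (1 - c) * f0 +
   (c * (g1 - f1) + (1 - c') * (g0 - f0) + (c' - c) * (g1 - f0)) by ring.
lra.
Qed.

Lemma extend (T : finType) (le : rel T) (Om : pred T) (H : T -> R) :
  (forall x, le x x) -> (forall x y z, le x y -> le y z -> le x z) ->
  (forall x y, le x y -> Om x -> Om y -> H x <= H y) ->
  exists H' : T -> R, (forall x y, le x y -> H' x <= H' y) /\ (forall x, Om x -> H' x = H x).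
Proof.
move=> refl trans mono.
pose m0 := - \sum_z `|H z|.
have m0le : forall z, m0 <= H z.
  move=> z; rewrite /m0 (bigD1 z) //= opprD.
  have : 0 <= \sum_(i | i != z) `|H i| by apply: sumr_ge0.
  have := ler_norm (- H z); rewrite normrN => h2.
  move=> h3; lra.
exists (fun y => \big[Num.max/m0]_(z | Om z && le z y) H z); split.
  move=> x y lxy; apply/bigmax_leP; split.
    have [z /andP[Oz lzy]|] := pickP (fun z => Om z && le z y).
      apply: le_trans (m0le z) _.
      by apply: (le_bigmax_cond m0 (j := z) (P := fun z => Om z && le z y) H); rewrite Oz lzy.
    by move=> none; rewrite big_pred0.
  move=> z /andP[Oz lzx].
  by apply: (le_bigmax_cond m0 (j := z) (P := fun z => Om z && le z y) H); rewrite Oz (trans _ _ _ lzx lxy).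
move=> x Ox; apply/eqP; rewrite eq_le; apply/andP; split.
  apply/bigmax_leP; split; first exact: m0le.
  by move=> z /andP[Oz lzx]; apply: mono.
by apply: (le_bigmax_cond m0 (j := x) (P := fun z => Om z && le z x) H); rewrite Ox refl.
Qed.

Lemma FE theta v (Phi : config V -> lconfig V -> R) :
  \sum_(x : config V) \sum_(y : lconfig V) lift_kernel theta x y * Phi x y =
  \sum_(s : config V | s v == false) \sum_(y : lconfig V | y v == Some false)
     lkv theta s y v * (\sum_(b : bool) \sum_(o : option bool) gl theta b o * Phi (upd s v b) (upd y v o)).
Proof.
rewrite (sum_fiber v false); apply: eq_bigr => s _.
under eq_bigr do rewrite (sum_fiber v (Some false)).
rewrite exchange_big /=; apply: eq_bigr => y _.
rewrite mulr_sumr; apply: eq_bigr => b _; rewrite mulr_sumr; apply: eq_bigr => o _.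
by rewrite lk_upd mulrCA mulrA.
Qed.

Section Main.
Variable mu : config V -> R.
Variable theta : R.
Hypothesis mu_d : is_distr mu.
Hypothesis ms : monotone_system mu.
Hypothesis th0 : 0 < theta.
Hypothesis th1 : theta < 1.

Let mu_ge0 : forall x, 0 <= mu x. Proof. by case: mu_d. Qed.
Let th01 : 0 <= theta <= 1. Proof. by rewrite !ltW. Qed.
Let tilt_ge0' : forall x, 0 <= tilt theta mu x. Proof. exact: tilt_ge0. Qed.

Definition Dinv (p f : config V -> R) : Prop :=
  [/\ forall z, 0 <= p z,
      forall x y, leC x y -> 0 < mu x -> 0 < mu y -> f x <= f y &
      forall z, (z != ones V) || (0 < mu z) -> p z = f z * mu z].

Definition liftp (p : config V -> R) (y : lconfig V) : R :=
  \sum_x p x * lift_kernel theta x y.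

Definition supp (nu : lconfig V -> R) : Prop :=
  forall y, ~~ good mu (contr y) -> nu y = 0.

Definition dom (nu lam : lconfig V -> R) : Prop :=
  forall F, incr F -> \sum_y lam y * F y <= \sum_y nu y * F y.

Lemma bad_mu0 x : ~~ good mu x -> mu x = 0 /\ x != ones V.
Proof.
rewrite /good negb_or => /andP[h1 h2]; split => //.
by apply/eqP; rewrite eq_le leNgt h1 mu_ge0.
Qed.

Lemma supp_liftp p f : Dinv p f -> supp (liftp p).
Proof.
case=> _ _ D2 y by_; rewrite /liftp big1 // => x _.
have [/eqP e|ne] := boolP (lift_kernel theta x y == 0); first by rewrite e mulr0.
have ex := lk_neq0 ne; rewrite -ex in by_ *.
have [m0 n1] := bad_mu0 by_.
by rewrite D2 ?n1 // m0 mulr0 mul0r.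
Qed.

Lemma supp_refresh nu : supp nu -> supp (refresh theta nu).
Proof.
move=> S y by_; rewrite /refresh big1 // => x _.
have [/eqP e|ne] := boolP (lift_kernel theta (contr x) y == 0); first by rewrite e mulr0.
by rewrite (lk_neq0 ne) in by_; rewrite S // mul0r.
Qed.

Lemma supp_alg nu : supp nu -> supp (mstep (alg_kernel theta mu) nu).
Proof.
move=> S y by_; rewrite /mstep big1 // => x _.
have [gx|bx] := boolP (good mu (contr x)); last by rewrite S // mul0r.
rewrite /alg_kernel big1 ?mulr0 // => v _.
case xv: (x v) => [b|].
  rewrite /=.
  case E: (y == upd x v (y v)) => //=.
  have ec : forall o, y v = o -> contr y = upd (contr x) v (o != Some false).
    by move=> o yo; rewrite (eqP E) contr_upd yo.
  case yv: (y v) => [[]|] //=.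
    apply/eqP; apply: contraNT by_ => nz.
    rewrite (ec _ yv) /= -(good_tilt mu_d th0); apply: G1 => //; by rewrite (good_tilt mu_d th0).
  apply/eqP; rewrite subr_eq0; apply: contraNT by_ => nz.
  rewrite (ec _ yv) /= -(good_tilt mu_d th0); apply: G2 => //; by rewrite eq_sym.
rewrite /=; case: eqP => // ee; by rewrite ee gx in by_.
Qed.


Lemma leL_updl x y v o : leL x y -> (rk o <= rk (y v))%N -> leL (upd x v o) y.
Proof. by move=> H h u; rewrite updE; case: eqP => [->|]. Qed.

Let cmt_ge0 x v : 0 <= cond_marg (tilt theta mu) x v. Proof. exact: cm_ge0. Qed.
Let cmt_le1 x v : cond_marg (tilt theta mu) x v <= 1. Proof. exact: cm_le1. Qed.

Lemma Av_mono F x y v : incr F -> leL x y -> good mu (contr x) -> good mu (contr y) ->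
  Av mu theta F x v <= Av mu theta F y v.
Proof.
move=> iF H gx gy; rewrite /Av.
have c0 := cmt_ge0 (contr x) v; have c1 := cmt_le1 (contr x) v.
case yv: (y v) => [b'|].
  case xv: (x v) => [b|]; last by move: (H v); rewrite xv yv; case: b' yv.
  have c0' := cmt_ge0 (contr y) v; have c1' := cmt_le1 (contr y) v.
  have hc : cond_marg (tilt theta mu) (contr x) v <= cond_marg (tilt theta mu) (contr y) v.
    apply: G3 => //; first exact: tilt_mono.
      exact: contr_mono.
    by rewrite (good_tilt mu_d th0).
    by rewrite (good_tilt mu_d th0).
  have h1 := iF _ _ (@leL_upd2 x y v (Some true) (Some true) H (leqnn _)).
  have h0 := iF _ _ (@leL_upd2 x y v (Some false) (Some false) H (leqnn _)).
  have h01 := iF _ _ (@leL_upd y v (Some false) (Some true) isT).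
  move: (cond_marg _ (contr x) v) (cond_marg _ (contr y) v) c0 c1 c0' c1' hc h1 h0 h01.
  move=> cx cy *; nra.
case xv: (x v) => [b|]; last exact: iF.
have r1 : (rk (Some true) <= rk (y v))%N by rewrite yv.
have r0 : (rk (Some false) <= rk (y v))%N by rewrite yv.
have h1 := iF _ _ (@leL_updl x y v (Some true) H r1).
have h0 := iF _ _ (@leL_updl x y v (Some false) H r0).
move: (cond_marg _ (contr x) v) c0 c1 h1 h0 => cx *; nra.
Qed.

Definition leLb (x y : lconfig V) : bool := [forall u, (rk (x u) <= rk (y u))%N].
Lemma leLbP x y : reflect (leL x y) (leLb x y).
Proof. exact: forallP. Qed.

Lemma dom_alg nu lam : supp nu -> supp lam -> dom nu lam ->
  dom (mstep (alg_kernel theta mu) nu) (mstep (alg_kernel theta mu) lam).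
Proof.
move=> Sn Sl D F iF; rewrite !sum_mstep.
pose H := kop (alg_kernel theta mu) F.
have Hmono : forall x y, leLb x y -> good mu (contr x) -> good mu (contr y) -> H x <= H y.
  move=> x y /leLbP lxy gx gy; rewrite /H !kopA; apply: ler_wpM2l; first by rewrite invr_ge0 ler0n.
  by apply: ler_sum => v _; apply: Av_mono.
have [H' [H'm H'e]] := extend (Om := fun x => good mu (contr x)) (fun x => introT (leLbP x x) (leL_refl x))
   (fun x y z (a : leLb x y) (b : leLb y z) => introT (leLbP x z)
      (fun u => leq_trans ((elimT (leLbP x y) a) u) ((elimT (leLbP y z) b) u))) Hmono.
have E : forall nu', supp nu' -> \sum_x nu' x * H x = \sum_x nu' x * H' x.
  move=> nu' S; apply: eq_bigr => x _.
  have [g|b] := boolP (good mu (contr x)); first by rewrite H'e.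
  by rewrite S // !mul0r.
rewrite (E _ Sn) (E _ Sl); apply: D.
by move=> x y /leLbP; apply: H'm.
Qed.


Definition Gf (F : lconfig V -> R) (x : config V) : R := \sum_y lift_kernel theta x y * F y.

Lemma lkv_updx (x : config V) (y : lconfig V) v b : lkv theta (upd x v b) y v = lkv theta x y v.
Proof. by apply: eq_bigr => u /negbTE uv; rewrite !updE uv. Qed.

Lemma GfE F x v : Gf F x = \sum_(y : lconfig V | y v == Some false)
   lkv theta x y v * \sum_o gl theta (x v) o * F (upd y v o).
Proof.
rewrite /Gf (sum_fiber v (Some false)); apply: eq_bigr => y _; rewrite mulr_sumr.
apply: eq_bigr => o _.
rewrite (_ : lift_kernel theta x (upd y v o) = gl theta (x v) o * lkv theta x y v); last first.
  by rewrite -lk_upd upd_id.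
by rewrite mulrCA mulrA.
Qed.

Lemma Gflip F (s : config V) v : incr F -> s v = false -> Gf F s <= Gf F (upd s v true).
Proof.
move=> iF sv; rewrite (GfE F s v) (GfE F (upd s v true) v); apply: ler_sum => y _.
rewrite lkv_updx upd_same sv !sum_opt /=; apply: ler_wpM2l; first exact: lkv_ge0.
have h1 := iF _ _ (@leL_upd y v (Some false) (Some true) isT).
have h2 := iF _ _ (@leL_upd y v (Some false) None isT).
have a1 : 0 <= theta * (F (upd y v (Some true)) - F (upd y v (Some false))).
  by apply: mulr_ge0; [exact: ltW | rewrite subr_ge0].
have a2 : 0 <= (1 - theta) * (F (upd y v None) - F (upd y v (Some false))).
  by apply: mulr_ge0; rewrite subr_ge0 // ltW.
nra.
Qed.

Lemma Gmono F : incr F -> forall s t, leC s t -> Gf F s <= Gf F t.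
Proof.
move=> iF.
suff H : forall k (s t : config V), #|[pred u | s u != t u]| = k -> leC s t -> Gf F s <= Gf F t.
  by move=> s t; apply: H.
elim=> [|k IH] s t hk le.
  have -> : s = t; last by [].
  apply/ffunP => u; apply/eqP; have := card0_eq hk u; rewrite !inE.
  by move/negbFE.
have : (0 < #|[pred u | s u != t u]|)%N by rewrite hk.
case/card_gt0P => u; rewrite inE => hu.
have su : s u = false by move: (le u) hu; case: (s u); case: (t u).
have tu : t u = true by move: (le u) hu; case: (s u); case: (t u).
apply: le_trans (Gflip iF su) _; apply: IH.
  move: hk; rewrite (cardD1 u) inE hu add1n => -[<-]; apply: eq_card => w.
  rewrite !inE updE; case: (eqVneq w u) => [->|wu] /=; first by rewrite tu eqxx.
  by [].
move=> w; rewrite updE; case: eqP => [->|_]; [by rewrite tu | exact: le].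
Qed.

Lemma dom_refresh nu p : dom nu (liftp p) -> dom (refresh theta nu) (liftp p).
Proof.
move=> D F iF.
have E1 : \sum_y refresh theta nu y * F y = \sum_x nu x * Gf F (contr x).
  rewrite /refresh; under eq_bigr do rewrite mulr_suml.
  rewrite exchange_big /=; apply: eq_bigr => x _; rewrite /Gf mulr_sumr.
  by apply: eq_bigr => y _; rewrite mulrA.
have E2 : \sum_y liftp p y * F y = \sum_y liftp p y * Gf F (contr y).
  rewrite /liftp; under eq_bigr do rewrite mulr_suml.
  under [RHS]eq_bigr do rewrite mulr_suml.
  rewrite exchange_big /= [RHS]exchange_big /=; apply: eq_bigr => x _.
  transitivity (p x * Gf F x).
    by rewrite /Gf mulr_sumr; apply: eq_bigr => y _; rewrite mulrA.
  transitivity (\sum_y p x * lift_kernel theta x y * Gf F x).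
    by rewrite -mulr_suml -mulr_sumr lk_sum mulr1.
  apply: eq_bigr => y _.
  have [/eqP e|ne] := boolP (lift_kernel theta x y == 0); first by rewrite e !mulr0 !mul0r.
  by rewrite (lk_neq0 ne).
rewrite E1 E2; apply: D => x y lxy; apply: (Gmono iF); exact: contr_mono.
Qed.


Definition Bv (x : config V) v := mu (upd x v true) + mu (upd x v false).
Definition Sv (p : config V -> R) (x : config V) v := p (upd x v true) + p (upd x v false).
Definition fstep (p : config V -> R) (x : config V) : R :=
  #|V|%:R^-1 * \sum_v (if Bv x v == 0 then 0 else Sv p x v / Bv x v).

Lemma leC_upd2 (x y : config V) v (b b' : bool) : leC x y -> (b <= b')%N -> leC (upd x v b) (upd y v b').
Proof. by move=> H h u; rewrite !updE; case: (u == v). Qed.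

Lemma upd_false_ones (x : config V) v : upd x v false != ones V.
Proof. by apply/eqP => /ffunP /(_ v); rewrite upd_same ffunE. Qed.

Lemma Bv_ge (x : config V) v : mu x <= Bv x v.
Proof.
rewrite /Bv -{1}(upd_id x v); have := mu_ge0 (upd x v true); have := mu_ge0 (upd x v false).
by case: (x v) => ? ?; lra.
Qed.

Lemma mstep_ge0 p : (forall z, 0 <= p z) -> forall z, 0 <= mstep (gd_kernel mu) p z.
Proof.
move=> p0 z; rewrite mstepG; apply: mulr_ge0; first by rewrite invr_ge0 ler0n.
apply: sumr_ge0 => v _; apply: mulr_ge0; first exact: addr_ge0.
case: (z v); [exact: cm_ge0 | by rewrite subr_ge0; exact: cm_le1].
Qed.

Lemma Dinv_step p f : Dinv p f -> Dinv (mstep (gd_kernel mu) p) (fstep p).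
Proof.
case=> D0 D1 D2; split.
- exact: mstep_ge0.
- move=> x y lxy mx my; rewrite /fstep; apply: ler_wpM2l; first by rewrite invr_ge0 ler0n.
  apply: ler_sum => v _.
  have Bx : 0 < Bv x v := lt_le_trans mx (Bv_ge x v).
  have By : 0 < Bv y v := lt_le_trans my (Bv_ge y v).
  rewrite (negbTE (lt0r_neq0 Bx)) (negbTE (lt0r_neq0 By)).
  have [/eqP x1|x1] := boolP (upd x v true == ones V).
    have e : y == upd x v (y v).
      apply/offvP => u uv; move/ffunP: (x1) => /(_ u).
      rewrite updE (negbTE uv) ffunE => xu; have := lxy u; rewrite xu; by case: (y u).
    by rewrite /Sv /Bv !(upd_offv _ e).
  have ex1 := D2 _ (introT orP (or_introl x1)).
  have ex0 := D2 _ (introT orP (or_introl (upd_false_ones x v))).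
  have ey0 := D2 _ (introT orP (or_introl (upd_false_ones y v))).
  have ey1 : f (upd y v true) * mu (upd y v true) <= p (upd y v true).
    have [h|h] := boolP ((upd y v true != ones V) || (0 < mu (upd y v true))).
      by rewrite (D2 _ h).
    move: h; rewrite negb_or => /andP[_ h].
    have -> : mu (upd y v true) = 0 by apply/eqP; rewrite eq_le leNgt h mu_ge0.
    by rewrite mulr0 D0.
  apply: (@le_trans _ _ ((f (upd y v true) * mu (upd y v true) + f (upd y v false) * mu (upd y v false)) / Bv y v)).
    rewrite /Sv ex1 ex0 /Bv; apply: avg_mono => //.
    - have hx : mu (upd x v true) + mu (upd x v false) != 0 by apply: lt0r_neq0.
      have hy : mu (upd y v true) + mu (upd y v false) != 0 by apply: lt0r_neq0.
      rewrite -(cm_feas hx) -(cm_feas hy).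
      by apply: G3 => //; apply/orP; left.
    - move=> h1 h2; apply: D1 => //; exact: leC_upd2.
    - move=> h1 h2; apply: D1 => //; exact: leC_upd2.
    - move=> h1 h2; apply: D1 => //; exact: leC_upd2.
  apply: ler_wpM2r; first by rewrite invr_ge0 ltW.
  by rewrite /Sv ey0 lerD2r.
- move=> z hz; rewrite mstepG /fstep -mulrA mulr_suml; congr (_ * _).
  apply: eq_bigr => v _.
  have [/eqP B0|Bn] := boolP (Bv z v == 0).
    have [h1 h0] := feas0 mu_ge0 B0.
    have mz : mu z = 0 by rewrite -(upd_id z v); case: (z v).
    rewrite mul0r.
    case zv: (z v); last by rewrite cm_infeas // subrr mulr0.
    rewrite cm_infeas // mulr1 /Sv.
    have z1 : upd z v true = z by rewrite -zv upd_id.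
    have zn : z != ones V by move: hz; rewrite mz ltxx orbF.
    rewrite z1 (D2 z) ?zn // (D2 (upd z v false)) ?upd_false_ones //.
    by rewrite mz h0 !mulr0 addr0.
  rewrite cm_feas // -/(Bv z v).
  have -> : mu z = if z v then mu (upd z v true) else mu (upd z v false).
    by rewrite -{1}(upd_id z v); case: (z v).
  by case: (z v); rewrite /Sv /Bv in Bn *; field.
Qed.


Lemma sum_liftp q F : \sum_y liftp q y * F y = \sum_x q x * Gf F x.
Proof.
rewrite /liftp; under eq_bigr do rewrite mulr_suml.
rewrite exchange_big /=; apply: eq_bigr => x _; rewrite /Gf mulr_sumr.
by apply: eq_bigr => y _; rewrite mulrA.
Qed.


Lemma fiber_step p f F (s : config V) (y : lconfig V) v :
  Dinv p f -> incr F -> s v = false -> y v = Some false ->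
  (forall u, u != v -> contr y u = s u) ->
  \sum_(b : bool) \sum_(o : option bool) gl theta b o *
     ((Sv p (upd s v b) v * (if upd s v b v then cond_marg mu (upd s v b) v
                             else 1 - cond_marg mu (upd s v b) v)) * F (upd y v o))
  <= \sum_(b : bool) \sum_(o : option bool) gl theta b o *
     (p (upd s v b) * Av mu theta F (upd y v o) v).
Proof.
case=> D0 D1 D2 iF sv yv off.
rewrite !sum_bool !sum_opt /= !upd_same /Sv !upd_upd !cm_upd.
rewrite /Av !upd_same !upd_upd !contr_upd !cm_upd /=.
have ec : cond_marg (tilt theta mu) (contr y) v = cond_marg (tilt theta mu) s v.
  by apply: cm_offv; apply/offvP.
rewrite ec.
set a := mu (upd s v true); set b := mu (upd s v false).
set al := p (upd s v true); set be := p (upd s v false).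
set F0 := F (upd y v (Some false)); set F1 := F (upd y v (Some true)); set Fs := F (upd y v None).
set c := cond_marg mu s v; set ct := cond_marg (tilt theta mu) s v.
have a0 : 0 <= a by apply: mu_ge0. have b0 : 0 <= b by apply: mu_ge0.
have al0 : 0 <= al by apply: D0. have be0 : 0 <= be by apply: D0.
have h01 : F0 <= F1 by apply: iF; apply: leL_upd.
have h1s : F1 <= Fs by apply: iF; apply: leL_upd.
have ebe : be = f (upd s v false) * b by apply: D2; rewrite upd_false_ones.
have eal : f (upd s v true) * a <= al.
  have [h|h] := boolP ((upd s v true != ones V) || (0 < a)).
    by rewrite /al (D2 _ h).
  move: h; rewrite negb_or => /andP[_ h].
  have -> : a = 0 by apply/eqP; rewrite eq_le leNgt h a0.
  by rewrite mulr0.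
have hab : be * a <= al * b.
  rewrite ebe.
  have [ap|] := ltrP 0 a; last first.
    move=> h; have -> : a = 0 by apply/eqP; rewrite eq_le h a0.
    by rewrite mulr0; apply: mulr_ge0.
  have [bp|] := ltrP 0 b; last first.
    move=> h; have -> : b = 0 by apply/eqP; rewrite eq_le h b0.
    by rewrite mulr0 mul0r mulr0.
  have hf : f (upd s v false) <= f (upd s v true).
    by apply: D1 => //; apply: leC_upd2.
  have : f (upd s v false) * b * a <= f (upd s v true) * a * b.
    by rewrite mulrAC; apply: ler_wpM2r; [exact: ltW | apply: ler_wpM2r => //; exact: ltW].
  move=> h; apply: le_trans h _; apply: ler_wpM2r => //; exact: ltW.
have H := @fiber_ineq theta a b al be F0 F1 Fs c ct th0 th1 a0 b0 al0 be0 h01 h1s hab.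
have Hi : a + b = 0 -> [/\ be = 0, c = 1 & ct = 1].
  move=> e; have [ea eb] := feas0 mu_ge0 e.
  have eb0 : b = 0 := eb.
  split; first by rewrite ebe eb0 mulr0.
    exact: cm_infeas.
  exact: (@cmt_infeas mu theta mu_d s v e).
have Hf : a + b != 0 -> c = a / (a + b) /\ ct = theta * a / (theta * a + b).
  by move=> e; split; [exact: cm_feas | exact: (@cmt_feas mu theta mu_d th0 s v e)].
have {H} H := H Hi Hf.
apply: (le_trans _ (le_trans H _)); rewrite le_eqVlt; apply/orP; left; apply/eqP; ring.
Qed.


Lemma M2 p f F : Dinv p f -> incr F ->
  \sum_y liftp (mstep (gd_kernel mu) p) y * F y <=
  \sum_y mstep (alg_kernel theta mu) (liftp p) y * F y.
Proof.
move=> Dp iF.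
rewrite sum_liftp [X in _ <= X]sum_mstep.
under eq_bigr do rewrite mstepG -mulrA mulr_suml.
under [X in _ <= X]eq_bigr do rewrite kopA mulrCA mulr_sumr.
rewrite -!mulr_sumr exchange_big [X in _ <= _ * X]exchange_big /=.
apply: ler_wpM2l; first by rewrite invr_ge0 ler0n.
apply: ler_sum => v _.
apply: (@le_trans _ _ (\sum_(x : config V) \sum_(y : lconfig V) lift_kernel theta x y *
   ((Sv p x v * (if x v then cond_marg mu x v else 1 - cond_marg mu x v)) * F y))).
  rewrite le_eqVlt; apply/orP; left; apply/eqP.
  apply: eq_bigr => x _; rewrite /Gf mulr_sumr; apply: eq_bigr => y _.
  by rewrite /Sv mulrCA.
apply: (@le_trans _ _ (\sum_(x : config V) \sum_(y : lconfig V) lift_kernel theta x y *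
   (p x * Av mu theta F y v))); last first.
  rewrite le_eqVlt; apply/orP; left; apply/eqP.
  rewrite /liftp; under [RHS]eq_bigr do rewrite mulr_suml.
  rewrite [RHS]exchange_big /=; apply: eq_bigr => x _; apply: eq_bigr => y _.
  by rewrite mulrCA mulrA.
rewrite !(FE theta v); apply: ler_sum => s /eqP sv; apply: ler_sum => y /eqP yv.
have [/eqP e|ne] := boolP (lkv theta s y v == 0); first by rewrite e !mul0r.
apply: ler_wpM2l; first exact: lkv_ge0.
apply: (fiber_step Dp iF sv yv).
move=> u uv; exact: lkv_neq0 ne u uv.
Qed.


Definition leCb (x y : config V) : bool := [forall u, (x u <= y u)%N].
Lemma leCbP x y : reflect (leC x y) (leCb x y).
Proof. exact: forallP. Qed.

Lemma tv_final p f nu : Dinv p f -> dom nu (liftp p) -> dTV p mu <= dTV (contr_law nu) mu.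
Proof.
move=> [D0 D1 D2] D.
pose inA x := [exists z, leCb z x && (mu z < p z)].
have u1 : forall x, inA x -> mu x <= p x.
  move=> x /existsP[z /andP[/leCbP lzx hz]].
  have [mz|mz] := ltrP 0 (mu z).
    have ez := D2 z (introT orP (or_intror mz)).
    have fz : 1 < f z by move: hz; rewrite ez -{1}(mul1r (mu z)) ltr_pM2r.
    have [mx|mx] := ltrP 0 (mu x); last by apply: le_trans mx (D0 x).
    rewrite (D2 x (introT orP (or_intror mx))) -{1}(mul1r (mu x)) ler_pM2r //.
    by apply: le_trans (ltW fz) (D1 _ _ lzx mz mx).
  have zo : z = ones V.
    apply/eqP; apply: contraTT hz => zn.
    by rewrite (D2 z); [rewrite (_ : mu z = 0) ?mulr0 ?ltxx // ; apply/eqP; rewrite eq_le mz mu_ge0 | rewrite zn].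
  have xo : x = ones V.
    apply/ffunP=> u; have := lzx u; rewrite zo !ffunE; by case: (x u).
  by rewrite xo -zo ltW.
have u2 : forall x, ~~ inA x -> p x <= mu x.
  move=> x; apply: contraNT; rewrite -ltNge => h; apply/existsP; exists x.
  by rewrite h andbT; apply/leCbP => u.
have u3 : forall x y, leC x y -> inA x -> inA y.
  move=> x y lxy /existsP[z /andP[/leCbP lzx hz]]; apply/existsP; exists z.
  by rewrite hz andbT; apply/leCbP => u; apply: leq_trans (lzx u) (lxy u).
pose ind x : R := if inA x then 1 else 0.
pose F y := ind (contr y).
have iF : incr F.
  move=> y y' lyy'; rewrite /F /ind.
  case h: (inA (contr y)); last by case: (inA _).
  by rewrite (u3 _ _ (contr_mono lyy') h).
have Hcl : forall G : config V -> R, \sum_y nu y * G (contr y) = \sum_x contr_law nu x * G x.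
  move=> G; rewrite (partition_big (fun y => contr y) xpredT) //=.
  apply: eq_bigr => x _; rewrite /contr_law mulr_suml; apply: eq_bigr => y /eqP <-.
  by [].
have Hlp : forall G : config V -> R, \sum_y liftp p y * G (contr y) = \sum_x p x * G x.
  move=> G; rewrite sum_liftp; apply: eq_bigr => x _; congr (_ * _).
  rewrite /Gf; transitivity (\sum_y lift_kernel theta x y * G x).
    apply: eq_bigr => y _.
    have [/eqP e|ne] := boolP (lift_kernel theta x y == 0); first by rewrite e !mul0r.
    by rewrite (lk_neq0 ne).
  by rewrite -mulr_suml lk_sum mul1r.
have hA : \sum_x p x * ind x <= \sum_x contr_law nu x * ind x.
  by rewrite -Hcl -Hlp; apply: D.
have hM : \sum_x p x = \sum_x contr_law nu x.
  have h1 : \sum_y liftp p y = \sum_x p x.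
    transitivity (\sum_y liftp p y * (fun _ : config V => 1 : R) (contr y)).
      by apply: eq_bigr => y _; rewrite mulr1.
    by rewrite (Hlp (fun _ => 1)); apply: eq_bigr => x _; rewrite mulr1.
  have h2 : \sum_y nu y = \sum_x contr_law nu x.
    transitivity (\sum_y nu y * (fun _ : config V => 1 : R) (contr y)).
      by apply: eq_bigr => y _; rewrite mulr1.
    by rewrite (Hcl (fun _ => 1)); apply: eq_bigr => x _; rewrite mulr1.
  rewrite -h1 -h2.
  have a := D (fun _ => 1) (fun _ _ _ => lexx 1).
  have b := D (fun _ => -1) (fun _ _ _ => lexx (-1)).
  move: a b; rewrite -!big_distrl /= !mulr1 !mulrN1 lerN2 => a b.
  by apply/eqP; rewrite eq_le a b.
rewrite /dTV; apply: ler_wpM2l; first by rewrite invr_ge0 ler0n.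
have E : forall q : config V -> R, \sum_x (if inA x then q x - mu x else - (q x - mu x)) =
    2 * (\sum_x q x * ind x - \sum_x mu x * ind x) - (\sum_x q x - \sum_x mu x).
  move=> q; rewrite -!sumrB mulr_sumr -sumrB; apply: eq_bigr => x _.
  by rewrite /ind; case: (inA x); ring.
apply: (@le_trans _ _ (\sum_x (if inA x then p x - mu x else - (p x - mu x)))).
  apply: ler_sum => x _; case h: (inA x).
    by rewrite ger0_norm // subr_ge0 u1 // h.
  by rewrite ler0_norm // subr_le0 u2 // h.
apply: (@le_trans _ _ (\sum_x (if inA x then contr_law nu x - mu x else - (contr_law nu x - mu x)))).
  by rewrite !E hM lerD2r; apply: ler_wpM2l => //; rewrite lerD2r.
apply: ler_sum => x _; case: (inA x); [exact: ler_norm | rewrite -normrN; exact: ler_norm].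
Qed.


Lemma main_inv T2 t : exists f, [/\ Dinv (law_gd mu t) f, supp (law_alg theta mu T2 t) &
   dom (law_alg theta mu T2 t) (liftp (law_gd mu t))].
Proof.
elim: t => [|t [f [Df S Dm]]].
  exists (fun z => if z == ones V then (mu (ones V))^-1 else 0); split.
  - split.
    + by move=> z; rewrite /law_gd /= /dirac; case: (z == _).
    + move=> x y lxy mx my; case: eqP => [ex|_]; last first.
        by case: (y == _) => //; rewrite invr_ge0 mu_ge0.
      have -> : y = ones V by apply/ffunP => u; have := lxy u; rewrite ex !ffunE; case: (y u).
      by rewrite eqxx.
    + move=> z hz; rewrite /law_gd /= /dirac; case: eqP => [ez|_]; last by rewrite mul0r.
      by rewrite ez mulVf //; apply: lt0r_neq0; move: hz; rewrite ez eqxx.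
  - move=> y by_; rewrite /=.
    have [/eqP e|ne] := boolP (lift_kernel theta (ones V) y == 0) => //.
    by move: by_; rewrite (lk_neq0 ne) /good eqxx orbT.
  - move=> F iF; rewrite le_eqVlt; apply/orP; left; apply/eqP; apply: eq_bigr => y _.
    congr (_ * _); rewrite /liftp /law_gd /= (bigD1 (ones V)) //= /dirac eqxx mul1r big1 ?addr0 //.
    by move=> x /negbTE ->; rewrite mul0r.
have eg : law_gd mu t.+1 = mstep (gd_kernel mu) (law_gd mu t) by [].
have ea : law_alg theta mu T2 t.+1 = mstep (alg_kernel theta mu)
   (if (t %% T2 == 0)%N then refresh theta (law_alg theta mu T2 t) else law_alg theta mu T2 t) by [].
rewrite eg ea.
exists (fstep (law_gd mu t)); split.
- exact: (Dinv_step Df).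
- apply: supp_alg; case: (_ == _) => //; exact: supp_refresh.
- move=> F iF.
  set nu' := (if _ then _ else _).
  have Sn : supp nu' by rewrite /nu'; case: (_ == _) => //; exact: supp_refresh.
  have Dn : dom nu' (liftp (law_gd mu t)).
    by rewrite /nu'; case: (_ == _) => //; exact: dom_refresh.
  apply: le_trans (M2 Df iF) _.
  apply: (dom_alg Sn (supp_liftp Df) Dn iF).
Qed.

Lemma final T2 t : dTV (law_gd mu t) mu <= dTV (contr_law (law_alg theta mu T2 t)) mu.
Proof. by have [f [Df _ Dm]] := main_inv T2 t; exact: tv_final Df Dm. Qed.

End Main.

End Basics.

Unset Implicit Arguments.

Theorem lemma3p2 (R : realFieldType) (V : finType) (mu : config V -> R)
  (theta : R) (T1 T2 : nat) :
  is_distr mu -> monotone_system mu ->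
  0 < theta < 1 -> (1 <= T1)%N -> (1 <= T2)%N ->
  forall t : nat, (t <= T1 * T2)%N ->
    dTV (law_gd mu t) mu <= dTV (contr_law (law_alg theta mu T2 t)) mu.
Proof.
move=> hd hms /andP[h0 h1] _ _ t _.
exact: final.
Qed.
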